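(* Let $N\ge3$, $G\in\mathcal G_2(N)$, $\varepsilon=0$ and $s_0\in S_{nc}$. Then for every $\gamma\in(0,1)$, $\Gamma_N(G|s_0,\gamma,0)$ has a positional trigger strategies profile $\bar\sigma$.
   Context: Setting. $G=(V,E)$ is a finite, simple, connected, undirected graph; $N\ge 3$ is an integer; $\gamma\in(0,1)$ and $\varepsilon\in[0,\frac1{N-1}]$ are parameters. There are $N$ tokens: cops $C_1,\dots,C_{N-1}$ (tokens $1,\dots,N-1$) and the robber $R$ (token $N$). A state is $s=(x^1,\dots,x^N,n)$ where $x^i\in V$ is the position of token $i$ and $n\in\{1,\dots,N\}$ is the token that moves next; $S^n$ denotes the set of states with token $n$ to move. A state is a capture state if $x^i=x^N$ for some $i\le N-1$; $S_{nc}$ is the set of noncapture states. In each turn exactly one token, the one to move, moves to a vertex of its closed neighbourhood (it may stay put); the order of moves is $C_1,C_2,\dots,C_{N-1},R,C_1,\dots$. Starting from an initial state $s_0\in S_{nc}$ at time $0$, the capture time is the first time $t$ at which a capture state occurs (infinite if never); after capture the game is over. Auxiliary games. For $m\in\{1,\dots,N\}$, $\Gamma_N^m(G|s_0,\gamma,\varepsilon)$ is the two-player zero-sum game in which player $P_m$ controls token $m$ and player $P_{-m}$ controls all other tokens, with the following payoff to $P_m$ ($P_{-m}$ receives its negative): $0$ if no capture ever occurs; if capture occurs at time $t$: for $m=N$, $-\gamma^t$; for $m\le N-1$, $\frac{1-\varepsilon}{K}\gamma^t$ if exactly $K\in\{1,\dots,N-2\}$ cops, including $C_m$, are on the robber's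 vertex, $\frac{\varepsilon}{N-K-1}\gamma^t$ if exactly $K\in\{1,\dots,N-2\}$ cops, not including $C_m$, are on the robber's vertex, and $\frac{\gamma^t}{N-1}$ if all $N-1$ cops are on the robber's vertex. $\Gamma^N_N$ is the modified cops-and-robber (CR) game. A pure positional strategy for token $n$ maps each state in $S^n\cap S_{nc}$ to an allowed next vertex. Each $\Gamma^m_N$ has optimal pure positional strategies (optimal from every initial state). For $m,n\in\{1,\dots,N\}$, $\phi^n_m$ denotes the strategy of token $n$ in a chosen pair of optimal pure positional strategies of $\Gamma^m_N$ (so $\phi^m_m$ is $P_m$'s optimal strategy and $(\phi^n_m)_{n\ne m}$ is $P_{-m}$'s). $\widehat\Sigma^n$ is the set of pure positional strategies of token $n$ that are components of optimal strategy pairs of $\Gamma^N_N$ (CR-optimal strategies). Trigger strategies. Given a choice of $(\phi^n_m)_{n,m}$, the trigger strategies profile $\bar\sigma=(\bar\sigma^1,\dots,\bar\sigma^N)$ of the $N$-player SCAR game $\Gamma_N(G|s_0,\gamma,\varepsilon)$ (same board and moves; player $n$ controls token $n$) is: token $n$, at current state $s$, plays $\phi^n_n(s)$ as long as every other player $m$ has followed $\phi^m_m$, and plays $\phi^n_m(s)$ from the moment a player $m\neq n$ deviates from $\phi^m_m$. Different choices of the optimal strategies give different trigger strategies profiles. $\bar\sigma$ is called positional if for all $n,m\in\{1,\dots,N\}$ there is $\widehat\sigma^n\in\widehat\Sigma^n$ with $\phi^n_m(s)=\widehat\sigma^n(s)$ for every state $s\in S^n\cap S_{nc}$ reachable from $s_0$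 by a finite sequence of legal moves passing only through noncapture states; otherwise $\bar\sigma$ is nonpositional. State cop number. For $s\in S_{nc}$, $c(G|s)=c_N(G|s)$ is the minimum $k\in\{1,\dots,N-1\}$ for which there exist $k$ cops and strategies for them such that, starting from $s$, a capture (by any cop) occurs whatever the other $N-k$ tokens (including $R$) do; $c(G|s)=\infty$ if no such $k$ exists. $c(G)$ is the classical cop number of $G$. Graph classes. $\mathcal G(N)=\{G: c(G)>N-1\}$; $\mathcal G_2(N)=\{G\in\mathcal G(N): c(G|s)=\infty\text{ for all } s\in S^N\cap S_{nc}\}$. *)

(* Defs.v *)
From Stdlib Require Import Reals ClassicalEpsilon.
From mathcomp Require Import all_boot.

Set Implicit Arguments.
Unset Strict Implicit.
Unset Printing Implicit Defensive.

Definition simple_graph (V : finType) (e : rel V) : Prop :=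
  (forall x y, e x y = e y x) /\ (forall x, ~~ e x x).
Definition connected_graph (V : finType) (e : rel V) : Prop :=
  forall x y, connect e x y.
Definition cnbr (V : finType) (e : rel V) (x y : V) : bool := (x == y) || e x y.

(* The N-token game.  Tokens are 'I_N: tokens 0..N-2 are the cops
   C_1..C_{N-1}, token N-1 is the robber R.                            *)
Definition is_cop (N : nat) (i : 'I_N) : bool := i < N.-1.
Definition is_robber (N : nat) (i : 'I_N) : bool := nat_of_ord i == N.-1.

(* a state: positions of the N tokens and the token to move *)
Definition state (V : finType) (N : nat) := ({ffun 'I_N -> V} * 'I_N)%type.

Definition on_robber (V : finType) (N : nat) (s : state V N) (i : 'I_N) : bool :=
  [exists j, is_robber j && (s.1 i == s.1 j)].
Definition capture (V : finType) (N : nat) (s : state V N) : bool :=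
  [exists i, is_cop i && on_robber s i].

(* the token to move moves to v; the next token (cyclically) moves next:
   order C_1, ..., C_{N-1}, R, C_1, ... *)
Definition step (V : finType) (N : nat) (s : state V N) (v : V) : state V N :=
  ([ffun i => if i == s.2 then v else s.1 i], ordS s.2).

(* general (history-dependent) pure strategies of a token: the
   argument is the list of past states and the current state *)
Definition strat (V : finType) (N : nat) := seq (state V N) -> state V N -> V.
Definition pstrat (V : finType) (N : nat) := state V N -> V.
Definition lift (V : finType) (N : nat) (f : pstrat V N) : strat V N :=
  fun _ s => f s.

Definition legal (V : finType) (e : rel V) (N : nat) (n : 'I_N) (f : strat V N)
  : Prop :=
  forall h (s : state V N), s.2 = n -> ~~ capture s -> cnbr e (s.1 n) (f h s).
Definition plegal (V : finType) (e : rel V) (N : nat) (n : 'I_N) (f : pstrat V N)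
  : Prop := legal e n (lift f).

(* the play: (history, state at time t) *)
Fixpoint run (V : finType) (N : nat) (p : 'I_N -> strat V N) (s0 : state V N)
  (t : nat) : seq (state V N) * state V N :=
  match t with
  | 0 => ([::], s0)
  | t'.+1 => let hs := run p s0 t' in
             (rcons hs.1 hs.2, step hs.2 (p hs.2.2 hs.1 hs.2))
  end.
Definition st (V : finType) (N : nat) (p : 'I_N -> strat V N) (s0 : state V N)
  (t : nat) : state V N := (run p s0 t).2.

(* capture time: first time a capture state occurs (None = infinite) *)
Definition capt_time (V : finType) (N : nat) (p : 'I_N -> strat V N)
  (s0 : state V N) : option nat :=
  match excluded_middle_informative
          (exists t, (fun t => capture (st p s0 t)) t) with
  | left H => Some (ex_minn H)
  | right _ => None
  end.

(* Payoffs of the auxiliary game Gamma^m_N (to player P_m). *)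
Definition reward (V : finType) (N : nat) (eps : R) (m : 'I_N) (s : state V N)
  : R :=
  if is_robber m then Ropp R1 else
  let K := #|[set i | is_cop i && on_robber s i]| in
  if K == N.-1 then Rdiv R1 (INR N.-1)
  else if on_robber s m then Rdiv (Rminus R1 eps) (INR K)
  else Rdiv eps (INR (N - K - 1)).

Definition payoff (V : finType) (N : nat) (gamma eps : R) (m : 'I_N)
  (p : 'I_N -> strat V N) (s0 : state V N) : R :=
  match capt_time p s0 with
  | Some t => Rmult (reward eps m (st p s0 t)) (pow gamma t)
  | None => R0
  end.

Definition upd (V : finType) (N : nat) (p : 'I_N -> strat V N) (m : 'I_N)
  (f : strat V N) : 'I_N -> strat V N :=
  fun i => if i == m then f else p i.

(* phi : a profile of pure positional strategies for all tokens is an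
   optimal strategy pair of Gamma^m_N (phi m is P_m's strategy, the
   others P_{-m}'s), optimal from every initial (noncapture) state,
   against all (history-dependent) legal deviations. *)
Definition optimal_pair (V : finType) (e : rel V) (N : nat) (gamma eps : R)
  (m : 'I_N) (phi : 'I_N -> pstrat V N) : Prop :=
  (forall n, plegal e n (phi n)) /\
  forall s0 : state V N, ~~ capture s0 ->
    (forall f : strat V N, legal e m f ->
       Rle (payoff gamma eps m (upd (fun i => lift (phi i)) m f) s0)
           (payoff gamma eps m (fun i => lift (phi i)) s0)) /\
    (forall q : 'I_N -> strat V N, (forall n, legal e n (q n)) ->
       Rle (payoff gamma eps m (fun i => lift (phi i)) s0)
           (payoff gamma eps m (upd q m (lift (phi m))) s0)).

(* CR-optimal strategies: components of optimal pairs of Gamma^N_N *)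
Definition CR_optimal (V : finType) (e : rel V) (N : nat) (gamma eps : R)
  (n : 'I_N) (f : pstrat V N) : Prop :=
  exists (r : 'I_N) (phi : 'I_N -> pstrat V N),
    is_robber r /\ optimal_pair e gamma eps r phi /\ phi n = f.

Inductive reachable (V : finType) (e : rel V) (N : nat) (s0 : state V N)
  : state V N -> Prop :=
  | reach0 : reachable e s0 s0
  | reachS : forall s v, reachable e s0 s -> cnbr e (s.1 s.2) v ->
             ~~ capture s -> ~~ capture (step s v) ->
             reachable e s0 (step s v).

(* A choice of optimal strategies: phi m n = phi^n_m. *)
Definition trigger_choice (V : finType) (e : rel V) (N : nat) (gamma eps : R)
  (phi : 'I_N -> 'I_N -> pstrat V N) : Prop :=
  forall m, optimal_pair e gamma eps m (phi m).

Definition positional_trigger (V : finType) (e : rel V) (N : nat)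
  (gamma eps : R) (s0 : state V N) (phi : 'I_N -> 'I_N -> pstrat V N) : Prop :=
  forall n m : 'I_N, exists f : pstrat V N,
    CR_optimal e gamma eps n f /\
    forall s, reachable e s0 s -> s.2 = n -> ~~ capture s -> phi m n s = f s.

(* Classical cops and robber game with k cops: cops place themselves,
   the robber places himself, then cops (all simultaneously) and robber
   alternate; each move to a vertex of the closed neighbourhood.
   cstate = (cop positions, robber position, cops_to_move). *)
Definition cstate (V : finType) (k : nat) := ({ffun 'I_k -> V} * V * bool)%type.
Definition ccapture (V : finType) (k : nat) (s : cstate V k) : bool :=
  [exists i, s.1.1 i == s.1.2].

Fixpoint crun (V : finType) (k : nat)
  (cm : seq (cstate V k) -> cstate V k -> {ffun 'I_k -> V})
  (rm : seq (cstate V k) -> cstate V k -> V) (s0 : cstate V k) (t : nat)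
  : seq (cstate V k) * cstate V k :=
  match t with
  | 0 => ([::], s0)
  | t'.+1 => let hs := crun cm rm s0 t' in
             let s := hs.2 in
             (rcons hs.1 s,
              if s.2 then (cm hs.1 s, s.1.2, false)
              else (s.1.1, rm hs.1 s, true))
  end.

Definition cop_win (V : finType) (e : rel V) (k : nat) : Prop :=
  exists (c0 : {ffun 'I_k -> V})
         (cm : seq (cstate V k) -> cstate V k -> {ffun 'I_k -> V}),
    (forall h (s : cstate V k), s.2 -> forall i, cnbr e (s.1.1 i) (cm h s i)) /\
    forall (r0 : {ffun 'I_k -> V} -> V) (rm : seq (cstate V k) -> cstate V k -> V),
      (forall h (s : cstate V k), ~~ s.2 -> cnbr e s.1.2 (rm h s)) ->
      exists t, ccapture (crun cm rm (c0, r0 c0, true) t).2.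

Definition cop_number_gt (V : finType) (e : rel V) (m : nat) : Prop :=
  forall k, 0 < k <= m -> ~ cop_win e k.

Definition in_calG (V : finType) (e : rel V) (N : nat) : Prop :=
  cop_number_gt e N.-1.

Definition k_cops_capture (V : finType) (e : rel V) (N : nat) (k : nat)
  (s : state V N) : Prop :=
  exists (A : {set 'I_N}) (sig : 'I_N -> strat V N),
    (forall i, i \in A -> is_cop i) /\ #|A| = k /\
    (forall i, i \in A -> legal e i (sig i)) /\
    forall tau : 'I_N -> strat V N, (forall i, legal e i (tau i)) ->
      exists t, capture (st (fun i => if i \in A then sig i else tau i) s t).

Definition state_cop_number_inf (V : finType) (e : rel V) (N : nat)
  (s : state V N) : Prop :=
  ~ exists k, (1 <= k <= N.-1) /\ k_cops_capture e k s.

Definition in_calG2 (V : finType) (e : rel V) (N : nat) : Prop :=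
  in_calG e N /\
  forall s : state V N, is_robber s.2 -> ~~ capture s -> state_cop_number_inf e s.

(* Main.v *)
Require Import Defs.
From Stdlib Require Import Reals ClassicalEpsilon Classical Lra.
From mathcomp Require Import all_boot zify.

Set Implicit Arguments.
Unset Strict Implicit.
Unset Printing Implicit Defensive.

Lemma robberE (N : nat) (rN : 'I_N) (HrN : nat_of_ord rN = N.-1) (j : 'I_N) :
  is_robber j = (j == rN).
Proof. by rewrite /is_robber -HrN. Qed.

Lemma copE (N : nat) (rN : 'I_N) (HrN : nat_of_ord rN = N.-1) (j : 'I_N) :
  is_cop j = (j != rN).
Proof.
rewrite /is_cop; have := ltn_ord j; case: eqP => [->|H]; first by rewrite HrN; lia.
have : nat_of_ord j <> nat_of_ord rN by move=> /val_inj.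
rewrite HrN; lia.
Qed.

Lemma onrE (V : finType) (N : nat) (rN : 'I_N) (HrN : nat_of_ord rN = N.-1)
  (s : state V N) i : on_robber s i = (s.1 i == s.1 rN).
Proof.
apply/existsP/idP => [[j /andP[]]|H]; last by exists rN; rewrite (robberE HrN) eqxx.
by rewrite (robberE HrN) => /eqP ->.
Qed.

Lemma capE (V : finType) (N : nat) (rN : 'I_N) (HrN : nat_of_ord rN = N.-1)
  (s : state V N) : capture s = [exists i, (i != rN) && (s.1 i == s.1 rN)].
Proof.
apply/existsP/existsP => [[i /andP[]]|[i /andP[]]] Hi Ho; exists i;
  by rewrite (copE HrN) (onrE HrN) in Hi Ho *; rewrite Hi Ho.
Qed.

Lemma stepE1 (V : finType) (N : nat) (s : state V N) v i :
  (step s v).1 i = if i == s.2 then v else s.1 i.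
Proof. by rewrite /step /= ffunE. Qed.

Lemma stepE2 (V : finType) (N : nat) (s : state V N) v :
  nat_of_ord (step s v).2 = (s.2).+1 %% N.
Proof. by []. Qed.

Lemma stS (V : finType) (N : nat) (p : 'I_N -> strat V N) s0 t :
  st p s0 t.+1 = step (st p s0 t) (p (st p s0 t).2 (run p s0 t).1 (st p s0 t)).
Proof. by []. Qed.

Lemma legal_move (V : finType) (e : rel V) (N : nat) (p : 'I_N -> strat V N) s0 t :
  (forall n, legal e n (p n)) -> ~~ capture (st p s0 t) ->
  cnbr e ((st p s0 t).1 (st p s0 t).2) (p (st p s0 t).2 (run p s0 t).1 (st p s0 t)).
Proof. by move=> Hl Hc; apply: Hl. Qed.
Lemma cnbr_refl (V : finType) (e : rel V) x : cnbr e x x.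
Proof. by rewrite /cnbr eqxx. Qed.

Lemma pre (V : finType) (e : rel V) (N : nat) (rN : 'I_N) (HrN : nat_of_ord rN = N.-1)
  (p : 'I_N -> strat V N) s0 tb (Hl : forall n, legal e n (p n)) t :
  (st p s0 tb).2 + t <= N.-1 ->
  (forall u, u < t -> ~~ capture (st p s0 (tb+u))) ->
  [/\ nat_of_ord (st p s0 (tb+t)).2 = (st p s0 tb).2 + t,
     forall k : 'I_N, ~~ ((st p s0 tb).2 <= k < (st p s0 tb).2 + t) ->
        (st p s0 (tb+t)).1 k = (st p s0 tb).1 k &
     forall k, cnbr e ((st p s0 tb).1 k) ((st p s0 (tb+t)).1 k)].
Proof.
have N0 := ltn_ord rN.
elim: t => [|t IH] Ht Hu.
  by rewrite !addn0; split => // k; apply: cnbr_refl.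
have [IH1 IH2 IH3] : [/\ nat_of_ord (st p s0 (tb+t)).2 = (st p s0 tb).2 + t,
     forall k : 'I_N, ~~ ((st p s0 tb).2 <= k < (st p s0 tb).2 + t) ->
        (st p s0 (tb+t)).1 k = (st p s0 tb).1 k &
     forall k, cnbr e ((st p s0 tb).1 k) ((st p s0 (tb+t)).1 k)].
  by apply: IH => [|u Hu']; [lia | apply: Hu; lia].
have Hc : ~~ capture (st p s0 (tb + t)) by apply: Hu.
have Hmv := legal_move Hl Hc.
set S := st p s0 (tb + t) in IH1 IH2 IH3 Hc Hmv.
set v := p S.2 (run p s0 (tb + t)).1 S in Hmv.
have -> : st p s0 (tb + t.+1) = step S v by rewrite addnS.
have Hm : S.1 S.2 = (st p s0 tb).1 S.2 by apply: IH2; rewrite IH1; lia.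
split.
- rewrite stepE2 IH1 modn_small; lia.
- move=> k Hk; rewrite stepE1; case: eqP => [Ek|_].
    by move: Hk; rewrite Ek IH1; lia.
  by apply: IH2; move: Hk; lia.
- move=> k; rewrite stepE1; case: eqP => [->|_]; last by apply: IH3.
  by rewrite -Hm.
Qed.
Definition Cstrat (V : finType) (e : rel V) (N : nat) (rN : 'I_N) : pstrat V N :=
  fun s => if cnbr e (s.1 s.2) (s.1 rN) then s.1 rN else s.1 s.2.
Definition escb (V : finType) (e : rel V) (N : nat) (rN : 'I_N) (s : state V N) v :=
  cnbr e (s.1 s.2) v && [forall i, (i != rN) ==> ~~ cnbr e (s.1 i) v].
Definition Rstrat (V : finType) (e : rel V) (N : nat) (rN : 'I_N) : pstrat V N :=
  fun s => if [pick v | escb e rN s v] is Some v then v else s.1 s.2.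
Definition Phi (V : finType) (e : rel V) (N : nat) (rN : 'I_N) : 'I_N -> pstrat V N :=
  fun n => if n == rN then Rstrat e rN else Cstrat e rN.

Lemma Cstrat_legal (V : finType) (e : rel V) (N : nat) (rN : 'I_N) n :
  plegal e n (Cstrat e rN).
Proof.
move=> h s <- _; rewrite /Defs.lift /Cstrat; case: ifP => // _; exact: cnbr_refl.
Qed.

Lemma Rstrat_legal (V : finType) (e : rel V) (N : nat) (rN : 'I_N) n :
  plegal e n (Rstrat e rN).
Proof.
move=> h s <- _; rewrite /Defs.lift /Rstrat; case: pickP => [v /andP[] //|_].
exact: cnbr_refl.
Qed.

Lemma Phi_legal (V : finType) (e : rel V) (N : nat) (rN : 'I_N) n :
  plegal e n (Phi e rN n).
Proof. rewrite /Phi; case: ifP => _; [exact: Rstrat_legal | exact: Cstrat_legal]. Qed.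

Lemma escape (V : finType) (e : rel V) (N : nat) (rN : 'I_N) (HrN : nat_of_ord rN = N.-1)
  (N3 : 3 <= N)
  (HG2 : forall s : state V N, is_robber s.2 -> ~~ capture s -> state_cop_number_inf e s)
  (s : state V N) (Hs2 : s.2 = rN) (Hc : ~~ capture s) : exists v, escb e rN s v.
Proof.
apply: NNPP => Hne.
apply: (HG2 s); first by rewrite Hs2 (robberE HrN).
- exact: Hc.
exists N.-1; split; first by apply/andP; split; lia.
exists [set~ rN], (fun _ => Defs.lift (Cstrat e rN)).
split; first by move=> i; rewrite in_setC1 (copE HrN).
split; first by rewrite cardsC1 card_ord.
split; first by move=> i _; apply: Cstrat_legal.
move=> tau Htau.
set prof := fun i => if i \in [set~ rN] then Defs.lift (Cstrat e rN) else tau i.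
have Hl : forall n, legal e n (prof n).
  by move=> n; rewrite /prof; case: ifP => _; [apply: Cstrat_legal | apply: Htau].
have Hmv := legal_move (s0 := s) (t := 0) Hl Hc.
have E1 : st prof s 1 = step s (tau rN [::] s).
  by rewrite stS /= /prof Hs2 in_setC1 eqxx.
rewrite /= /prof Hs2 in_setC1 eqxx /= in Hmv.
set v := tau rN [::] s in E1 Hmv.
case Hc1 : (capture (st prof s 1)); first by exists 1.
have [i /andP[Hi Hiv]] : exists i, (i != rN) && cnbr e (s.1 i) v.
  apply/existsP; apply: contraT => Hn; case: Hne; exists v.
  rewrite /escb Hs2 Hmv /=; apply/forallP => i; apply/implyP => Hi.
  by apply: contra Hn => H; apply/existsP; exists i; rewrite Hi.
have Hi' : nat_of_ord i < N.-1.
  have := ltn_ord i; have : nat_of_ord i <> nat_of_ord rN by move=> /val_inj /eqP; rewrite (negbTE Hi).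
  lia.
case Hex : [exists u : 'I_i, capture (st prof s (1 + u))].
  by move/existsP: Hex => [u Hu]; exists (1 + u).
have S12 : nat_of_ord (st prof s 1).2 = 0 by rewrite E1 stepE2 Hs2 HrN prednK ?modnn //; lia.
have X1 : forall u, u < i -> ~~ capture (st prof s (1 + u)).
  move=> u Hu; move/negbT/existsPn: Hex => /(_ (Ordinal Hu)) //.
have [X2 P2 _] := pre HrN (s0 := s) (tb := 1) (t := i) Hl ltac:(rewrite S12; lia) X1.
have Xi : (st prof s (1 + i)).1 i = s.1 i.
  rewrite P2; last by rewrite S12; lia.
  by rewrite E1 stepE1 Hs2 (negbTE Hi).
have Xr : (st prof s (1 + i)).1 rN = v.
  rewrite P2; last by rewrite S12 HrN; lia.
  by rewrite E1 stepE1 Hs2 eqxx.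
have Xm : (st prof s (1 + i)).2 = i by apply: ord_inj; rewrite X2 S12.
exists (1 + i).+1.
have -> : st prof s (1 + i).+1 =
    step (st prof s (1 + i)) (Cstrat e rN (st prof s (1 + i))).
  by rewrite stS Xm /prof in_setC1 Hi.
move: (st prof s (1 + i)) Xi Xr Xm => X Xi Xr Xm.
rewrite /Cstrat Xm Xi Xr Hiv.
rewrite (capE HrN); apply/existsP; exists i; rewrite Hi !stepE1 Xm eqxx.
by case: (rN =P i) => _; rewrite ?Xr eqxx.
Qed.
Definition Inv (V : finType) (e : rel V) (N : nat) (rN : 'I_N) (s : state V N) :=
  ~~ capture s &&
  [forall i, ((i != rN) && (s.2 <= i)) ==> ~~ cnbr e (s.1 i) (s.1 rN)].

Lemma cnbr_eq (V : finType) (e : rel V) x y : x == y -> cnbr e x y.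
Proof. by rewrite /cnbr => ->. Qed.

Lemma inv_step (V : finType) (e : rel V) (N : nat) (rN : 'I_N) (HrN : nat_of_ord rN = N.-1)
  (N3 : 3 <= N)
  (HG2 : forall s : state V N, is_robber s.2 -> ~~ capture s -> state_cop_number_inf e s)
  (s : state V N) v : Inv e rN s -> cnbr e (s.1 s.2) v ->
  (s.2 = rN -> v = Rstrat e rN s) -> Inv e rN (step s v).
Proof.
move=> /andP[Hc /forallP Hf] Hv Hr.
case: (s.2 =P rN) => Hs.
  have [w Hw] := escape HrN N3 HG2 Hs Hc.
  have {Hw}[w' Hw'] : exists w', (v = w') /\ escb e rN s w'.
    rewrite (Hr Hs) /Rstrat; case: pickP => [w' Hw'|/(_ w)]; last by rewrite Hw.
    by exists w'.
  case: Hw' => -> /andP[_ /forallP Hw'].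
  have Ht : forall i, i != rN -> ~~ cnbr e ((step s w').1 i) ((step s w').1 rN).
    move=> i Hi; rewrite !stepE1 Hs eqxx (negbTE Hi).
    by move/implyP: (Hw' i) => /(_ Hi).
  apply/andP; split.
    rewrite (capE HrN); apply/existsPn => i; apply/negP => /andP[Hi Heq].
    by move: (Ht i Hi); rewrite cnbr_eq.
  by apply/forallP => i; apply/implyP => /andP[Hi _]; apply: Ht.
have Hm : nat_of_ord s.2 < N.-1.
  have := ltn_ord s.2; have : nat_of_ord s.2 <> nat_of_ord rN by move=> /ord_inj.
  rewrite HrN; lia.
have Ers : (step s v).1 rN = s.1 rN by rewrite stepE1; case: (rN =P s.2) => // E; case: Hs.
have Es2 : nat_of_ord (step s v).2 = (s.2).+1 by rewrite stepE2 modn_small //; lia.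
apply/andP; split.
  rewrite (capE HrN); apply/existsPn => i; apply/negP => /andP[Hi].
  rewrite Ers stepE1; case: (i =P s.2) => [Ei|Ei] Heq.
    move/implyP: (Hf s.2); rewrite -Ei Hi leqnn /= => /(_ isT).
    by rewrite -(eqP Heq) Ei Hv.
  by move: Hc; rewrite (capE HrN) => /existsPn /(_ i); rewrite Hi Heq.
apply/forallP => i; apply/implyP => /andP[Hi Hle].
rewrite Es2 in Hle.
rewrite Ers stepE1; case: (i =P s.2) => [Ei|_]; first by move: Hle; rewrite Ei; lia.
by move/implyP: (Hf i); apply; rewrite Hi /=; lia.
Qed.

Lemma inv_all (V : finType) (e : rel V) (N : nat) (rN : 'I_N) (HrN : nat_of_ord rN = N.-1)
  (N3 : 3 <= N)
  (HG2 : forall s : state V N, is_robber s.2 -> ~~ capture s -> state_cop_number_inf e s)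
  (p : 'I_N -> strat V N) (Hl : forall n, legal e n (p n))
  (Hp : forall h s, p rN h s = Rstrat e rN s) s0 :
  Inv e rN s0 -> forall t, Inv e rN (st p s0 t).
Proof.
move=> H0; elim=> [//|t IH].
rewrite stS; apply: inv_step => //.
  by apply: legal_move => //; case/andP: IH.
by move=> ->; rewrite Hp.
Qed.
Lemma capt_never (V : finType) (N : nat) (p : 'I_N -> strat V N) s0 :
  (forall t, ~~ capture (st p s0 t)) -> capt_time p s0 = None.
Proof.
move=> H; rewrite /capt_time; case: excluded_middle_informative => // [[t Ht]].
by move: (H t); rewrite Ht.
Qed.

Lemma capt_late (V : finType) (N : nat) (p : 'I_N -> strat V N) s0 t0 :
  (forall u, u <= t0 -> ~~ capture (st p s0 u)) ->
  capt_time p s0 = None \/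
  exists T, capt_time p s0 = Some T /\ t0 < T /\ capture (st p s0 T).
Proof.
move=> H; rewrite /capt_time; case: excluded_middle_informative => Hx; last by left.
right; case: ex_minnP => T HT _; exists T; split => //; split => //.
rewrite ltnNge; apply/negP => HT'; by move: (H T HT'); rewrite HT.
Qed.

Lemma capt_exact (V : finType) (N : nat) (p : 'I_N -> strat V N) s0 t0 :
  (forall u, u <= t0 -> ~~ capture (st p s0 u)) -> capture (st p s0 t0.+1) ->
  capt_time p s0 = Some t0.+1.
Proof.
move=> H Hc; rewrite /capt_time; case: excluded_middle_informative => Hx; last first.
  by case: Hx; exists t0.+1.
congr Some; case: ex_minnP => T HT Hmin; apply/eqP; rewrite eqn_leq; apply/andP; split; first exact: Hmin.
rewrite ltnNge; apply/negP => HT'; by move: (H T HT'); rewrite HT.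
Qed.

Lemma caseA_nocap (V : finType) (e : rel V) (N : nat) (rN : 'I_N) (HrN : nat_of_ord rN = N.-1)
  (p : 'I_N -> strat V N) (Hl : forall n, legal e n (p n)) (s0 : state V N)
  (Hc0 : ~~ capture s0) (c : 'I_N) (Hcr : c != rN) (Hjc : s0.2 <= c)
  (Hfirst : forall k : 'I_N, s0.2 <= k < c -> ~~ cnbr e (s0.1 k) (s0.1 rN)) :
  forall u, u <= c - s0.2 -> ~~ capture (st p s0 u).
Proof.
have Hc : nat_of_ord c < N.-1.
  have := ltn_ord c; have : nat_of_ord c <> nat_of_ord rN by move=> /ord_inj /eqP; rewrite (negbTE Hcr).
  rewrite HrN; lia.
suff H : forall u, u <= c - s0.2 -> forall w, w <= u -> ~~ capture (st p s0 w).
  by move=> u Hu; apply: (H u).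
elim=> [_ w|u IH Hu w]; first by rewrite leqn0 => /eqP ->.
rewrite leq_eqVlt => /orP[/eqP ->|Hwu]; last by apply: IH; lia.
have Hw : forall w, w < u.+1 -> ~~ capture (st p s0 (0 + w)).
  by move=> w' Hw'; rewrite add0n; apply: (IH _ w'); lia.
have [_ P2 P3] := pre HrN (s0 := s0) (tb := 0) (t := u.+1) Hl ltac:(rewrite /st /=; lia) Hw.
rewrite !add0n in P2 P3; change (st p s0 0) with s0 in P2; change (st p s0 0) with s0 in P3.
have Er : (st p s0 u.+1).1 rN = s0.1 rN by apply: P2; rewrite HrN; lia.
rewrite (capE HrN); apply/existsPn => k; apply/negP => /andP[Hk].
rewrite Er => Heq.
case Hr : (s0.2 <= k < s0.2 + u.+1).
  move: (Hfirst k) (P3 k); rewrite -(eqP Heq) => /(_ ltac:(lia)) /negbTE -> //.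
move: Hc0; rewrite (capE HrN) => /existsPn /(_ k).
by rewrite Hk -(P2 k) ?Hr // Heq.
Qed.

Lemma caseA_cap (V : finType) (e : rel V) (N : nat) (rN : 'I_N) (HrN : nat_of_ord rN = N.-1)
  (p : 'I_N -> strat V N) (Hl : forall n, legal e n (p n)) (s0 : state V N)
  (Hc0 : ~~ capture s0) (c : 'I_N) (Hcr : c != rN) (Hjc : s0.2 <= c)
  (Hfirst : forall k : 'I_N, s0.2 <= k < c -> ~~ cnbr e (s0.1 k) (s0.1 rN))
  (Hadj : cnbr e (s0.1 c) (s0.1 rN))
  (Hp : forall h s, p c h s = Cstrat e rN s) :
  forall k : 'I_N, ((st p s0 (c - s0.2).+1).1 k == (st p s0 (c - s0.2).+1).1 rN) =
            (k == c) || (k == rN).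
Proof.
have Hc : nat_of_ord c < N.-1.
  have := ltn_ord c; have : nat_of_ord c <> nat_of_ord rN by move=> /ord_inj /eqP; rewrite (negbTE Hcr).
  rewrite HrN; lia.
have Hnc := caseA_nocap HrN Hl Hc0 Hcr Hjc Hfirst.
have Hw : forall w, w < c - s0.2 -> ~~ capture (st p s0 (0 + w)).
  by move=> w Hw; rewrite add0n; apply: Hnc; lia.
have [P1 P2 _] := pre HrN (s0 := s0) (tb := 0) (t := c - s0.2) Hl ltac:(rewrite /st /=; lia) Hw.
rewrite !add0n in P1 P2; change (st p s0 0) with s0 in P1; change (st p s0 0) with s0 in P2.
have Xm : (st p s0 (c - s0.2)).2 = c by apply: ord_inj; rewrite P1; lia.
have Xc : (st p s0 (c - s0.2)).1 c = s0.1 c by apply: P2; lia.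
have Xr : (st p s0 (c - s0.2)).1 rN = s0.1 rN by apply: P2; rewrite HrN; lia.
have Xn : ~~ capture (st p s0 (c - s0.2)) by apply: Hnc.
rewrite stS Xm Hp.
move: (st p s0 (c - s0.2)) Xm Xc Xr Xn => X Xm Xc Xr Xn k.
rewrite /Cstrat Xm Xc Xr Hadj !stepE1 Xm (eq_sym rN c) (negbTE Hcr) Xr.
case: (k =P c) => [_|Hkc]; first by rewrite eqxx.
case: (k =P rN) => [->|Hkr]; first by rewrite Xr eqxx.
move: Xn; rewrite (capE HrN) => /existsPn /(_ k); rewrite Xr.
by case: (X.1 k == s0.1 rN); case: (k =P rN).
Qed.
Lemma inv_bounds (K : nat) : 0 < K -> Rle R0 (Rdiv R1 (INR K)) /\ Rle (Rdiv R1 (INR K)) R1.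
Proof.
move=> HK; have H1 : Rle R1 (INR K) by apply: (Rle_trans _ (INR 1)); [simpl; lra | apply: le_INR; apply/leP].
have H0 : Rlt R0 (INR K) by lra.
rewrite /Rdiv Rmult_1_l; split; first by apply: Rlt_le; apply: Rinv_0_lt_compat.
apply: (Rle_trans _ (/ 1)); [apply: Rinv_le_contravar; lra | rewrite Rinv_1; lra].
Qed.

Lemma reward_cop_bounds (V : finType) (N : nat) (rN : 'I_N) (HrN : nat_of_ord rN = N.-1)
  (N3 : 3 <= N) (m : 'I_N) (Hm : m != rN) (s : state V N) :
  Rle R0 (reward R0 m s) /\ Rle (reward R0 m s) R1.
Proof.
rewrite /reward (robberE HrN) (negbTE Hm).
case: ifP => _; first by apply: inv_bounds; lia.
case: ifP => Ho.
  rewrite /Rminus Ropp_0 Rplus_0_r; apply: inv_bounds.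
  by apply/card_gt0P; exists m; rewrite inE (copE HrN) Hm Ho.
by rewrite /Rdiv Rmult_0_l; lra.
Qed.

Lemma reward_rob (V : finType) (N : nat) (m : 'I_N) (s : state V N) :
  is_robber m -> reward R0 m s = Ropp R1.
Proof. by rewrite /reward => ->. Qed.

Lemma reward_single (V : finType) (N : nat) (rN : 'I_N) (HrN : nat_of_ord rN = N.-1)
  (N3 : 3 <= N) (s : state V N) (c : 'I_N) (Hcr : c != rN)
  (Hs : forall k : 'I_N, (s.1 k == s.1 rN) = (k == c) || (k == rN))
  (m : 'I_N) (Hm : m != rN) :
  reward R0 m s = if m == c then R1 else R0.
Proof.
have E : [set i | is_cop i && on_robber s i] = [set c].
  apply/setP => i; rewrite !inE (copE HrN) (onrE HrN) Hs.
  by case: (i =P rN) => [->|_] /=; [apply/esym/eqP => E; rewrite E eqxx in Hcr | rewrite orbF].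
rewrite /reward (robberE HrN) (negbTE Hm) E cards1.
have -> : (1 == N.-1) = false by apply/eqP; lia.
rewrite (onrE HrN) Hs (negbTE Hm) orbF.
case: ifP => _; last by rewrite /Rdiv Rmult_0_l.
by rewrite /Rminus Ropp_0 Rplus_0_r /Rdiv /= Rinv_1 Rmult_1_l.
Qed.

Lemma pow_bounds g n : Rlt R0 g /\ Rlt g R1 -> Rlt R0 (pow g n) /\ Rle (pow g n) R1.
Proof.
move=> Hg; elim: n => [|n IH] /=; first lra.
split; first by apply: Rmult_lt_0_compat; lra.
nra.
Qed.

Lemma pow_mono g t T : Rlt R0 g /\ Rlt g R1 -> t <= T -> Rle (pow g T) (pow g t).
Proof.
move=> Hg /subnKC <-; elim: (T - t) => [|d IH]; first by rewrite addn0; lra.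
rewrite addnS /=; have := pow_bounds (t + d) Hg; nra.
Qed.
Lemma upd_legal (V : finType) (e : rel V) (N : nat) (p : 'I_N -> strat V N) m f :
  (forall n, legal e n (p n)) -> legal e m f -> forall n, legal e n (upd p m f n).
Proof. by move=> Hp Hf n; rewrite /upd; case: eqP => [->|]. Qed.

Lemma pay_rob_le0 (V : finType) (N : nat) g (Hg : Rlt R0 g /\ Rlt g R1) (m : 'I_N)
  (p : 'I_N -> strat V N) s0 : is_robber m -> Rle (payoff g R0 m p s0) R0.
Proof.
move=> Hm; rewrite /payoff; case: (capt_time p s0) => [T|]; last lra.
rewrite reward_rob //; have := pow_bounds T Hg; nra.
Qed.

Lemma pay_cop_ge0 (V : finType) (N : nat) (rN : 'I_N) (HrN : nat_of_ord rN = N.-1)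
  (N3 : 3 <= N) g (Hg : Rlt R0 g /\ Rlt g R1) (m : 'I_N) (Hm : m != rN)
  (p : 'I_N -> strat V N) s0 : Rle R0 (payoff g R0 m p s0).
Proof.
rewrite /payoff; case: (capt_time p s0) => [T|]; last lra.
have := reward_cop_bounds HrN N3 Hm (st p s0 T); have := pow_bounds T Hg; nra.
Qed.

Definition late (V : finType) (N : nat) (p : 'I_N -> strat V N) s0 t0 :=
  capt_time p s0 = None \/
  exists T, capt_time p s0 = Some T /\ t0 < T /\ capture (st p s0 T).

Lemma pay_late_cop (V : finType) (N : nat) (rN : 'I_N) (HrN : nat_of_ord rN = N.-1)
  (N3 : 3 <= N) g (Hg : Rlt R0 g /\ Rlt g R1) (m : 'I_N) (Hm : m != rN)
  (p : 'I_N -> strat V N) s0 t0 : late p s0 t0 ->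
  Rle (payoff g R0 m p s0) (pow g t0.+1).
Proof.
rewrite /payoff => [[->|[T [-> [HT _]]]]]; first by have := pow_bounds t0.+1 Hg; lra.
have := reward_cop_bounds HrN N3 Hm (st p s0 T); have := pow_bounds T Hg.
have := pow_mono Hg HT; nra.
Qed.

Lemma pay_late_rob (V : finType) (N : nat) g (Hg : Rlt R0 g /\ Rlt g R1) (m : 'I_N)
  (p : 'I_N -> strat V N) s0 t0 : is_robber m -> late p s0 t0 ->
  Rle (Ropp (pow g t0.+1)) (payoff g R0 m p s0).
Proof.
move=> Hm; rewrite /payoff => [[->|[T [-> [HT _]]]]]; first by have := pow_bounds t0.+1 Hg; lra.
rewrite reward_rob //; have := pow_mono Hg HT; lra.
Qed.

Lemma pay_exact (V : finType) (N : nat) g (m : 'I_N) (p : 'I_N -> strat V N) s0 T :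
  capt_time p s0 = Some T ->
  payoff g R0 m p s0 = Rmult (reward R0 m (st p s0 T)) (pow g T).
Proof. by rewrite /payoff => ->. Qed.

Lemma pay_none (V : finType) (N : nat) g (m : 'I_N) (p : 'I_N -> strat V N) s0 :
  capt_time p s0 = None -> payoff g R0 m p s0 = R0.
Proof. by rewrite /payoff => ->. Qed.
Lemma OP (V : finType) (e : rel V) (N : nat) (rN : 'I_N) (HrN : nat_of_ord rN = N.-1)
  (N3 : 3 <= N)
  (HG2 : forall s : state V N, is_robber s.2 -> ~~ capture s -> state_cop_number_inf e s)
  g (Hg : Rlt R0 g /\ Rlt g R1) (m : 'I_N) : optimal_pair e g R0 m (Phi e rN).
Proof.
split; first by move=> n; apply: Phi_legal.
move=> s0 Hc0.
set P0 := fun i => Defs.lift (Phi e rN i).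
have HP0 : forall n, legal e n (P0 n) by move=> n; apply: Phi_legal.
have PhiR : forall h s, P0 rN h s = Rstrat e rN s by move=> h s; rewrite /P0 /Defs.lift /Phi eqxx.
have PhiC : forall c : 'I_N, c != rN -> forall h s, P0 c h s = Cstrat e rN s.
  by move=> c Hc h s; rewrite /P0 /Defs.lift /Phi (negbTE Hc).
case Hex : [exists k, [&& k != rN, s0.2 <= k & cnbr e (s0.1 k) (s0.1 rN)]].
-
  move/existsP: Hex => [k0 Hk0].
  case: (@arg_minnP _ k0 (fun k : 'I_N => [&& k != rN, s0.2 <= k & cnbr e (s0.1 k) (s0.1 rN)]) (fun k : 'I_N => nat_of_ord k) Hk0) => c /and3P[Hcr Hjc Hadj] Hmin.
  have Hfirst : forall k : 'I_N, s0.2 <= k < c -> ~~ cnbr e (s0.1 k) (s0.1 rN).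
    move=> k /andP[H1 H2]; apply/negP => Hn.
    have Hkr : k != rN.
      apply/eqP => E; have := ltn_ord c; rewrite E HrN in H2; lia.
    by have := Hmin k; rewrite Hkr H1 Hn /= => /(_ isT); lia.
  set t0 := c - s0.2.
  have Late : forall p, (forall n, legal e n (p n)) -> late p s0 t0.
    by move=> p Hl; apply: capt_late; apply: (caseA_nocap HrN Hl Hc0 Hcr Hjc Hfirst).
  have Exact : forall p, (forall n, legal e n (p n)) -> (forall h s, p c h s = Cstrat e rN s) ->
      forall mm : 'I_N, payoff g R0 mm p s0 =
        Rmult (if mm == rN then Ropp R1 else if mm == c then R1 else R0) (pow g t0.+1).
    move=> p Hl Hp mm.
    have Hs := caseA_cap HrN Hl Hc0 Hcr Hjc Hfirst Hadj Hp.
    rewrite (pay_exact _ _ (T := t0.+1)); last first.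
      apply: capt_exact; first exact: (caseA_nocap HrN Hl Hc0 Hcr Hjc Hfirst).
      rewrite (capE HrN); apply/existsP; exists c; rewrite Hcr /=.
      by rewrite /t0 Hs eqxx.
    case: (mm =P rN) => [->|/eqP Hmm]; first by rewrite reward_rob // (robberE HrN).
    by rewrite (reward_single HrN N3 Hcr Hs Hmm).
  have E0 := Exact P0 HP0 (PhiC c Hcr).
  split.
  + move=> f Hf.
    have Hl := upd_legal HP0 Hf.
    rewrite E0; case: (m =P rN) => [Em|/eqP Hm].
      rewrite Exact //; first by rewrite Em eqxx; apply: Rle_refl.
      by move=> h s; rewrite /upd Em (negbTE Hcr) PhiC.
    case: (m =P c) => [Emc|/eqP Hmc].
      have -> : Rmult R1 (pow g t0.+1) = pow g t0.+1 by ring.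
      exact: (pay_late_cop HrN N3 Hg Hm (Late _ Hl)).
    rewrite Exact //; first by rewrite (negbTE Hm) (negbTE Hmc); apply: Rle_refl.
    by move=> h s; rewrite /upd eq_sym (negbTE Hmc) PhiC.
  + move=> q Hq.
    have Hl := upd_legal Hq (HP0 m).
    rewrite E0; case: (m =P rN) => [Em|/eqP Hm].
      have := pay_late_rob (m := m) (p := upd q m (P0 m)) (s0 := s0) Hg
        ltac:(rewrite Em (robberE HrN) eqxx //) (Late _ Hl).
      by have -> : Rmult (Ropp R1) (pow g t0.+1) = Ropp (pow g t0.+1) by ring.
    case: (m =P c) => [Emc|/eqP Hmc].
      rewrite Exact //; first by rewrite (negbTE Hm) Emc eqxx; apply: Rle_refl.
      by move=> h s; rewrite /upd Emc eqxx /Defs.lift /Phi (negbTE Hcr).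
    have -> : Rmult R0 (pow g t0.+1) = R0 by ring.
    exact: (pay_cop_ge0 HrN N3 Hg Hm).
-
  have HI : Inv e rN s0.
    apply/andP; split => //; apply/forallP => i; apply/implyP => /andP[Hi Hle].
    apply/negP => Hn; move/negbT/existsPn: Hex => /(_ i); by rewrite Hi Hle Hn.
  have Zero : forall p, (forall n, legal e n (p n)) ->
      (forall h s, p rN h s = Rstrat e rN s) -> forall mm, payoff g R0 mm p s0 = R0.
    move=> p Hl Hp mm; apply: pay_none; apply: capt_never => t.
    by have /andP[] := inv_all HrN N3 HG2 Hl Hp HI t.
  rewrite (Zero P0 HP0 PhiR); split.
  + move=> f Hf.
    case: (m =P rN) => [Em|/eqP Hm].
      by apply: pay_rob_le0 => //; rewrite Em (robberE HrN).
    rewrite Zero; first exact: Rle_refl.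
      exact: upd_legal.
    by move=> h s; rewrite /upd eq_sym (negbTE Hm) PhiR.
  + move=> q Hq.
    case: (m =P rN) => [Em|/eqP Hm]; last exact: (pay_cop_ge0 HrN N3 Hg Hm).
    rewrite Zero; first exact: Rle_refl.
      exact: upd_legal.
    by move=> h s; rewrite /upd Em eqxx /Defs.lift /Phi eqxx.
Qed.

Theorem mainTheorem10 (V : finType) (e : rel V) (N : nat) :
  simple_graph e -> connected_graph e -> 3 <= N -> in_calG2 e N ->
  forall s0 : state V N, ~~ capture s0 ->
  forall gamma : R, Rlt R0 gamma /\ Rlt gamma R1 ->
  exists phi : 'I_N -> 'I_N -> pstrat V N,
    trigger_choice e gamma R0 phi /\ positional_trigger e gamma R0 s0 phi.
Proof.
move=> _ _ N3 [_ HG2] s0 _ g Hg.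
have HN : N.-1 < N by lia.
set rN := Ordinal HN.
have HrN : nat_of_ord rN = N.-1 by [].
exists (fun _ => Phi e rN); split.
  by move=> m; apply: (OP HrN N3 HG2 Hg).
move=> n m; exists (Phi e rN n); split => //.
exists rN, (Phi e rN); split; first by rewrite (robberE HrN).
by split => //; apply: (OP HrN N3 HG2 Hg).
Qed.
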